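(* Let $G=(V,E)$ be an undirected graph with capacities $c\colon E\to\mathbb{Z}_{>0}$ and lower bounds $\ell\colon E\to\mathbb{Z}_{\ge0}$ with $\ell(e)\le c(e)$. Let $G^2$ be the multigraph obtained by replacing each edge $e=uv$ by one ''heavy'' edge $uv$ of weight $(c(e)+\ell(e))/2$ and $c(e)-\ell(e)$ ''light'' edges $uv$ of weight $1/2$. Then there exist an orientation of $G$ and an integer circulation $f$ on the resulting directed graph with $\ell(a)\le f(a)\le c(a)$ for every arc $a$ if and only if $G^2$ has an orientation in which, for every vertex, the total weight of incoming edges equals the total weight of outgoing edges.
   Context: A circulation on a directed graph is a function $f$ on arcs with nonnegative values such that at every vertex the total inflow equals the total outflow. An orientation chooses a direction for each edge (of a multigraph, each parallel edge separately). *)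

(* Defs.v *)
From mathcomp Require Import all_boot all_order all_algebra.
Set Implicit Arguments. Unset Strict Implicit. Unset Printing Implicit Defensive.
Import Order.TTheory GRing.Theory Num.Theory.

Section Orient.
Variables (V X : finType) (end1 end2 : X -> V) (o : X -> bool).
Definition ohead (x : X) : V := if o x then end2 x else end1 x.
Definition otail (x : X) : V := if o x then end1 x else end2 x.
End Orient.

Definition is_circulation (V X : finType) (end1 end2 : X -> V) (o : X -> bool)
  (f : X -> nat) : Prop :=
  forall v : V,
    \sum_(x | ohead end1 end2 o x == v) f x = \sum_(x | otail end1 end2 o x == v) f x.

Definition balanced_orientation (V X : finType) (end1 end2 : X -> V)
  (w : X -> rat) (o : X -> bool) : Prop :=
  forall v : V,
    (\sum_(x | ohead end1 end2 o x == v) w x = \sum_(x | otail end1 end2 o x == v) w x)%R.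

(* The multigraph G^2: edges are pairs (e, None) = heavy copy of e, and
   (e, Some i), i < c e - l e, the light copies of e. *)
Definition G2edge (E : finType) (c l : E -> nat) : finType :=
  {e : E & option 'I_(c e - l e)}.

Definition G2end (V E : finType) (c l : E -> nat) (en : E -> V)
  (a : G2edge c l) : V := en (tag a).

Definition G2weight (E : finType) (c l : E -> nat) (a : G2edge c l) : rat :=
  match tagged a with
  | None => (((c (tag a))%:R + (l (tag a))%:R) / 2)%R
  | Some _ => (1 / 2)%R
  end.

(* Main.v *)
Require Import Defs.
From mathcomp Require Import all_boot all_order all_algebra.
From mathcomp Require Import ring zify.
Import Order.TTheory GRing.Theory Num.Theory.
Set Implicit Arguments. Unset Strict Implicit.

Definition sgn (b : bool) : rat := if b then 1%R else (-1)%R.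

Lemma bigopt (T : finType) (F : option T -> rat) :
  (\sum_y F y = F None + \sum_i F (Some i))%R.
Proof.
rewrite (bigD1 None) //=; congr (_ + _)%R.
rewrite (reindex_omap Some id). 2: by case=> [t|].
by apply: eq_bigl => i; rewrite eqxx.
Qed.

Lemma balance_iff (X V : finType) (h t : X -> V) (w : X -> rat) (v : V) :
  (\sum_(x | h x == v) w x = \sum_(x | t x == v) w x)%R <->
  (\sum_x (((h x == v)%:R - (t x == v)%:R) * w x) = 0)%R.
Proof.
rewrite (big_mkcond (fun x => h x == v)) (big_mkcond (fun x => t x == v)).
have -> : (\sum_x (((h x == v)%:R - (t x == v)%:R) * w x) =
   \sum_x (if h x == v then w x else 0) - \sum_x (if t x == v then w x else 0))%R.
  rewrite -sumrB; apply: eq_bigr => x _.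
  by case: (h x == v); case: (t x == v); rewrite /=; ring.
split => [->|/eqP]; first by rewrite GRing.subrr.
by rewrite GRing.subr_eq0 => /eqP.
Qed.

Lemma orient_D (V X : finType) (e1 e2 : X -> V) (o : X -> bool) v x :
  (((Defs.ohead e1 e2 o x == v)%:R - (Defs.otail e1 e2 o x == v)%:R : rat) =
   sgn (o x) * ((e2 x == v)%:R - (e1 x == v)%:R))%R.
Proof. by rewrite /Defs.ohead /Defs.otail /sgn; case: (o x); ring. Qed.

Lemma circ_iff (V X : finType) (e1 e2 : X -> V) (o : X -> bool) (f : X -> nat) :
  is_circulation e1 e2 o f <->
  forall v, (\sum_x (((e2 x == v)%:R - (e1 x == v)%:R) * (sgn (o x) * (f x)%:R)) = 0 :> rat)%R.
Proof.
split => H v.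
- have := H v; move/(congr1 (fun n : nat => (n%:R : rat))).
  rewrite !natr_sum => /balance_iff H0; rewrite -[RHS]H0.
  by apply: eq_bigr => x _; rewrite orient_D; ring.
- apply/eqP; rewrite -(eqr_nat rat) !natr_sum; apply/eqP; apply/balance_iff.
  rewrite -[RHS](H v); apply: eq_bigr => x _; rewrite orient_D; ring.
Qed.

Definition G2b (E : finType) (c l : E -> nat) (o2 : G2edge c l -> bool) (e : E) : bool :=
  o2 (existT (fun e => option 'I_(c e - l e)) e None).

Definition G2K (E : finType) (c l : E -> nat) (o2 : G2edge c l -> bool) (e : E) : nat :=
  \sum_(i < c e - l e) (o2 (existT (fun e => option 'I_(c e - l e)) e (Some i)) == G2b o2 e : nat).

Definition G2d (E : finType) (c l : E -> nat) (o2 : G2edge c l -> bool) (e : E) : rat :=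
  (sgn (G2b o2 e) * ((l e)%:R + (G2K o2 e)%:R))%R.

Lemma sgn_eq a b : sgn a = (sgn b * (2 * (a == b)%:R - 1))%R.
Proof. by case: a; case: b; rewrite /sgn /=; ring. Qed.

Lemma edge_sum (E : finType) (c l : E -> nat) (hl : forall e, (l e <= c e)%N)
   (o2 : G2edge c l -> bool) (e : E) :
  (\sum_(y : option 'I_(c e - l e))
     sgn (o2 (existT (fun e => option 'I_(c e - l e)) e y)) *
     G2weight (existT (fun e => option 'I_(c e - l e)) e y) = G2d o2 e)%R.
Proof.
rewrite bigopt /G2weight /= /G2d /G2K.
under eq_bigr do rewrite (sgn_eq _ (G2b o2 e)).
rewrite -/(G2b o2 e).
set b := G2b o2 e.
set q := fun i : 'I_(c e - l e) => (o2 (existT (fun e => option 'I_(c e - l e)) e (Some i)) == b : nat).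
have -> : (\sum_(i < c e - l e) sgn b * (2 * (q i)%:R - 1) * (1 / 2) =
   \sum_(i < c e - l e) (sgn b * (q i)%:R - sgn b / 2))%R.
  by apply: eq_bigr => i _; field.
rewrite sumrB -mulr_sumr sumr_const card_ord -[(_ *+ (c e - l e))%R]mulr_natr natr_sum natrB ?hl // /q.
by field.
Qed.

Lemma G2_iff (V E : finType) (end1 end2 : E -> V) (c l : E -> nat)
  (hl : forall e, (l e <= c e)%N) (o2 : G2edge c l -> bool) :
  balanced_orientation (G2end end1) (G2end end2) (@G2weight E c l) o2 <->
  forall v, (\sum_e (((end2 e == v)%:R - (end1 e == v)%:R) * G2d o2 e) = 0 :> rat)%R.
Proof.
have key : forall v, (\sum_x
   (((Defs.ohead (G2end end1) (G2end end2) o2 x == v)%:R -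
     (Defs.otail (G2end end1) (G2end end2) o2 x == v)%:R) * G2weight x) =
   \sum_e (((end2 e == v)%:R - (end1 e == v)%:R) * G2d o2 e) :> rat)%R.
  move=> v.
  under [RHS]eq_bigr => e _ do rewrite -(edge_sum hl o2 e) mulr_sumr.
  rewrite (sig_big_dep xpredT (fun _ _ => true)).
  apply: eq_big => [[e y]//|[e y] _].
  by rewrite orient_D /G2end /=; ring.
split => H v.
- by rewrite -key; apply/balance_iff; apply: H.
- by apply/balance_iff; rewrite key.
Qed.

Lemma sum_lt n k : \sum_(i < n) ((i < k)%N : nat) = minn k n.
Proof.
elim: n => [|n IH]; first by rewrite big_ord0; lia.
rewrite big_ord_recr /= IH; case: (ltnP n k) => h /=; lia.
Qed.

Theorem mainTheorem5 (V E : finType) (end1 end2 : E -> V)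
  (c l : E -> nat)
  (hc : forall e, 0 < c e) (hl : forall e, l e <= c e) :
  (exists (o : E -> bool) (f : E -> nat),
      is_circulation end1 end2 o f /\ (forall e, l e <= f e <= c e))
  <->
  (exists o2 : G2edge c l -> bool,
      balanced_orientation (G2end end1) (G2end end2) (@G2weight E c l) o2).
Proof.
split.
- move=> [o [f [Hc Hb]]].
  pose o2 := fun x : G2edge c l => match tagged x with
     | None => o (tag x)
     | Some i => if (i < f (tag x) - l (tag x))%N then o (tag x) else ~~ o (tag x) end.
  exists o2; apply/(G2_iff _ _ hl) => v.
  rewrite -[RHS]((proj1 (circ_iff _ _ _ _)) Hc v); apply: eq_bigr => e _.
  congr (_ * _)%R.
  rewrite /G2d /G2K /G2b /o2 /=.
  have -> : \sum_(i < c e - l e) ((if (i < f e - l e)%N then o e else ~~ o e) == o e : nat)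
       = \sum_(i < c e - l e) ((i < f e - l e)%N : nat).
    by apply: eq_bigr => i _; case: (i < f e - l e)%N; case: (o e).
  rewrite sum_lt -natrD.
  have /andP [h1 h2] := Hb e.
  congr (_ * _%:R)%R; lia.
- move=> [o2 H].
  exists (G2b o2), (fun e => l e + G2K o2 e); split.
  + apply/circ_iff => v; rewrite -[RHS]((proj1 (G2_iff _ _ hl _)) H v).
    by apply: eq_bigr => e _; rewrite /G2d natrD.
  + move=> e; have hK : G2K o2 e <= c e - l e.
      rewrite /G2K; apply: (@leq_trans (\sum_(i < c e - l e) 1)); first by apply: leq_sum => i _; exact: leq_b1.
      by rewrite sum_nat_const card_ord muln1.
    have := hl e; lia.
Qed.
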